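(* Let $X$ be a Banach space, $H$ a Hilbert space, $S\in\mathcal{L}(X,H)$, $F\subset X$ convex and $n\in\mathbb{N}_0$. Then $c_n(S,F)\le(n+1)\,b_n(S,F)$. If $F$ is additionally symmetric, then $c_n(S,F)\le\sqrt{n+1}\,b_n(S,F)$.
   Context: Gelfand numbers: $c_n(S,F)=\inf_{L_1,\dots,L_n\in X'}\sup\{\tfrac12\|S(f)-S(g)\|: f,g\in F,\ L_k(f)=L_k(g)\ \forall k\le n\}$. Bernstein numbers: $b_n(S,F)$ is the supremum of all $r>0$ for which there exist an $(n+1)$-dimensional linear subspace $V\subset X$ on which $S$ is injective and $g\in F$ with $g+\{v\in V:\|Sv\|\le r\}\subset F$ (supremum of the empty set is $0$). *)

(* Defs.v *)
From HB Require Import structures.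
From mathcomp Require Import all_boot all_order all_algebra.
From mathcomp Require Import all_classical all_reals all_analysis.
Set Implicit Arguments. Unset Strict Implicit. Unset Printing Implicit Defensive.
Import Order.TTheory GRing.Theory Num.Theory.
Import numFieldNormedType.Exports.
Local Open Scope classical_set_scope.
Local Open Scope ring_scope.

Section Defs.
Variable R : realType.

Definition is_linear (X Y : lmodType R) (f : X -> Y) : Prop :=
  forall (a : R) (x y : X), f (a *: x + y) = a *: f x + f y.

Definition bounded_linear (X Y : normedModType R) (f : X -> Y) : Prop :=
  is_linear f /\ continuous f.

Definition dual_elt (X : normedModType R) (L : X -> R^o) : Prop :=
  bounded_linear L.

(* a (real) Hilbert space: a complete normed space whose norm comes from
   an inner product ip *)
Definition is_inner_product (H : normedModType R) (ip : H -> H -> R) : Prop :=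
  [/\ forall x y, ip x y = ip y x,
      forall a x y z, ip (a *: x + y) z = a * ip x z + ip y z
    & forall x, `|x| ^+ 2 = ip x x].

Definition convex (X : lmodType R) (F : set X) : Prop :=
  forall x y (t : R), F x -> F y -> 0 <= t -> t <= 1 ->
    F (t *: x + (1 - t) *: y).

Definition symmetric_set (X : lmodType R) (F : set X) : Prop :=
  forall x, F x -> F (- x).

Definition gelfand_radius (X H : normedModType R) (S : X -> H) (F : set X)
    (n : nat) (L : 'I_n -> X -> R) : \bar R :=
  ereal_sup [set ((`|S fg.1 - S fg.2| / 2)%:E) | fg in
     [set fg : X * X | F fg.1 /\ F fg.2 /\ forall k, L k fg.1 = L k fg.2]].

Definition gelfand_number (X H : normedModType R) (S : X -> H) (F : set X)
    (n : nat) : \bar R :=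
  ereal_inf [set gelfand_radius S F L | L in
     [set L : 'I_n -> X -> R | forall k, dual_elt (L k)]].

Definition span_of (X : lmodType R) (m : nat) (e : 'I_m -> X) : set X :=
  [set v | exists c : 'I_m -> R, v = \sum_(i < m) c i *: e i].

Definition lin_indep (X : lmodType R) (m : nat) (e : 'I_m -> X) : Prop :=
  forall c : 'I_m -> R, \sum_(i < m) c i *: e i = 0 -> forall i, c i = 0.

Definition bernstein_admissible (X H : normedModType R) (S : X -> H)
    (F : set X) (n : nat) (r : R) : Prop :=
  0 < r /\
  exists e : 'I_n.+1 -> X,
    lin_indep e /\
    {in span_of e &, injective S} /\
    exists g, F g /\
      forall v, span_of e v -> `|S v| <= r -> F (g + v).

Definition bernstein_number (X H : normedModType R) (S : X -> H)
    (F : set X) (n : nat) : \bar R :=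
  ereal_sup ([set r%:E | r in bernstein_admissible S F n] `|` [set 0%E]).

End Defs.

(* Main.v *)
Require Import Defs.
From HB Require Import structures.
From mathcomp Require Import all_boot all_order all_algebra.
From mathcomp Require Import all_classical all_reals all_analysis.
From mathcomp Require Import ring lra.
Import Order.TTheory GRing.Theory Num.Theory.
Import numFieldNormedType.Exports.
Local Open Scope classical_set_scope.
Local Open Scope ring_scope.
Set Implicit Arguments. Unset Strict Implicit. Unset Printing Implicit Defensive.

Lemma lin0 (R : realType) (X Y : lmodType R) (f : X -> Y) :
  is_linear f -> f 0 = 0.
Proof.
move=> hf; have := hf 1 0 0; rewrite !scale1r addr0 => h.
by have := congr1 (fun v => v - f 0) h; rewrite /= subrr addrK.
Qed.

Lemma linZ (R : realType) (X Y : lmodType R) (f : X -> Y) a x :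
  is_linear f -> f (a *: x) = a *: f x.
Proof. by move=> hf; have := hf a x 0; rewrite !addr0 (lin0 hf) addr0. Qed.

Lemma linD (R : realType) (X Y : lmodType R) (f : X -> Y) x y :
  is_linear f -> f (x + y) = f x + f y.
Proof. by move=> hf; have := hf 1 x y; rewrite !scale1r. Qed.

Lemma linN (R : realType) (X Y : lmodType R) (f : X -> Y) x :
  is_linear f -> f (- x) = - f x.
Proof. by move=> hf; rewrite -scaleN1r (linZ _ _ hf) scaleN1r. Qed.

Lemma linB (R : realType) (X Y : lmodType R) (f : X -> Y) x y :
  is_linear f -> f (x - y) = f x - f y.
Proof. by move=> hf; rewrite (linD _ _ hf) (linN _ hf). Qed.

Lemma lin_sum (R : realType) (X Y : lmodType R) (f : X -> Y) m
  (c : 'I_m -> R) (e : 'I_m -> X) :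
  is_linear f -> f (\sum_(i < m) c i *: e i) = \sum_(i < m) c i *: f (e i).
Proof.
move=> hf; elim: m c e => [|m IH] c e; first by rewrite !big_ord0 (lin0 hf).
rewrite !big_ord_recr /= (linD _ _ hf) (linZ _ _ hf).
by rewrite (IH (fun i => c (widen_ord (leqnSn m) i)) (fun i => e (widen_ord (leqnSn m) i))).
Qed.


Lemma ipZDl (R : realType) (H : normedModType R) (ip : H -> H -> R) a x y z :
  is_inner_product ip -> ip (a *: x + y) z = a * ip x z + ip y z.
Proof. by case=> _ h _; apply: h. Qed.

Lemma ip_lin (R : realType) (H : normedModType R) (ip : H -> H -> R) z :
  is_inner_product ip -> is_linear (fun x : H => (ip x z : R^o)).
Proof. by move=> hip a x y; rewrite (ipZDl _ _ _ _ hip). Qed.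

Lemma ip_linr (R : realType) (H : normedModType R) (ip : H -> H -> R) z :
  is_inner_product ip -> is_linear (fun x : H => (ip z x : R^o)).
Proof.
move=> hip a x y; case: (hip) => hs _ _.
by rewrite !(hs z) (ipZDl _ _ _ _ hip).
Qed.

Lemma ip_sum (R : realType) (H : normedModType R) (ip : H -> H -> R) m
  (c : 'I_m -> R) (d : 'I_m -> H) :
  is_inner_product ip -> (forall i j, i != j -> ip (d i) (d j) = 0) ->
  `|\sum_(i < m) c i *: d i| ^+ 2 = \sum_(i < m) c i ^+ 2 * `|d i| ^+ 2.
Proof.
move=> hip ho; case: (hip) => hs _ hn.
rewrite hn.
have := lin_sum c d (ip_lin (\sum_(i < m) c i *: d i) hip) => /= ->.
apply: eq_bigr => i _.
have := lin_sum c d (ip_linr (d i) hip) => /= ->.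
rewrite (bigD1 i) //= big1 ?addr0; last first.
  by move=> j hj; rewrite ho ?scaler0 // eq_sym.
by rewrite -hn /GRing.scale /= mulrA expr2.
Qed.

Lemma polar (R : realType) (H : normedModType R) (ip : H -> H -> R) z h :
  is_inner_product ip -> ip z h = 4^-1 * (`|z + h| ^+ 2 - `|z - h| ^+ 2).
Proof.
move=> hip; case: (hip) => hs _ hn.
rewrite !hn.
have l1 := ip_lin (z + h) hip; have l2 := ip_lin (z - h) hip.
have r1 := ip_linr z hip; have r2 := ip_linr h hip.
rewrite /= in l1 l2 r1 r2.
rewrite (linD _ _ l1) (linB _ _ l2) (linD _ _ r1) (linD _ _ r2) (linB _ _ r1) (linB _ _ r2).
rewrite (hs h z).
have -> : ip z z + ip z h + (ip z h + ip h h) - (ip z z - ip z h - (ip z h - ip h h))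
   = 4 * ip z h.
  by rewrite (_ : 4 = 1 + 1 + 1 + 1) //; ring.
by rewrite mulrA mulVf ?mul1r // pnatr_eq0.
Qed.

Lemma ip_cont (R : realType) (X H : normedModType R) (ip : H -> H -> R)
  (S : X -> H) h :
  is_inner_product ip -> continuous S ->
  continuous (fun x => (ip (S x) h : R)).
Proof.
move=> hip hS.
have -> : (fun x => (ip (S x) h : R)) =
  (fun x => (4^-1 : R) * ((`|S x + h| : R) * `|S x + h| - (`|S x - h| : R) * `|S x - h|)).
  by apply/funext => x; rewrite (polar _ _ hip) !expr2.
move=> x.
have c1 : {for x, continuous (fun y => (`|S y + h| : R))}.
  apply: (continuous_comp (f := fun y => S y + h) (g := fun v : H => (`|v| : R))).
    by apply: continuousD; [exact: hS | exact: cst_continuous].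
  exact: norm_continuous.
have c2 : {for x, continuous (fun y => (`|S y - h| : R))}.
  apply: (continuous_comp (f := fun y => S y - h) (g := fun v : H => (`|v| : R))).
    by apply: continuousB; [exact: hS | exact: cst_continuous].
  exact: norm_continuous.
have c0 : {for x, continuous (fun=> (4^-1 : R))} by exact: cst_continuous.
have := continuousM c0 (continuousB (continuousM c1 c1) (continuousM c2 c2)).
exact.
Qed.

Lemma convex_comb (R : realType) (X : lmodType R) (F : set X) m
  (w : 'I_m -> R) (p : 'I_m -> X) :
  convex F -> (forall i, 0 <= w i) -> \sum_(i < m) w i <= 1 ->
  (\sum_(i < m) w i < 1 -> F 0) -> (forall i, F (p i)) ->
  F (\sum_(i < m) w i *: p i).
Proof.
move=> hF; elim: m w p => [|m IH] w p hw hs h0 hp.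
  by rewrite big_ord0; apply: h0; rewrite big_ord0 ltr01.
rewrite big_ord_recr /=.
rewrite big_ord_recr /= in hs h0.
set w' := fun i : 'I_m => w (widen_ord (leqnSn m) i).
set p' := fun i : 'I_m => p (widen_ord (leqnSn m) i).
set wm := w ord_max.
have hw' : forall i, 0 <= w' i by move=> i; apply: hw.
have s0 : 0 <= \sum_(i < m) w' i by apply: sumr_ge0 => i _.
have [wm1|wm1] := eqVneq wm 1.
  have s00 : \sum_(i < m) w' i = 0.
    apply/eqP; rewrite eq_le s0 andbT.
    by move: hs; rewrite -/wm wm1 -lerBrDr subrr.
  rewrite big1 ?add0r; last first.
    by move=> i _; have := psumr_eq0P (fun j _ => hw' j) s00 (i:=i) isT; rewrite /w' => ->; rewrite scale0r.
  by rewrite wm1 scale1r; apply: hp.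
have wmle : wm <= 1 by move: hs; rewrite -/wm; move: s0; lra.
have t0 : 0 < 1 - wm by rewrite subr_gt0 lt_neqAle wm1 wmle.
have tn0 : 1 - wm != 0 by rewrite gt_eqF.
have hq := IH (fun i => w' i / (1 - wm)) p'.
have -> : \sum_(i < m) w (widen_ord (leqnSn m) i) *: p (widen_ord (leqnSn m) i)
    = (1 - wm) *: \sum_(i < m) (w' i / (1 - wm)) *: p' i.
  rewrite scaler_sumr; apply: eq_bigr => i _.
  by rewrite scalerA mulrC divfK.
rewrite addrC; apply: hF; [exact: hp| |exact: hw|exact: wmle].
have ssum : \sum_(i < m) w' i / (1 - wm) = (\sum_(i < m) w' i) / (1 - wm).
  by rewrite mulr_suml.
apply: hq.
- by move=> i; apply: divr_ge0 => //; apply: ltW.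
- by rewrite ssum ler_pdivrMr // mul1r lerBrDr.
- rewrite ssum ltr_pdivrMr // mul1r => h; apply: h0.
  by rewrite -/wm; move: h; lra.
- by move=> i; apply: hp.
Qed.

Lemma cs_sum (R : realType) m (a : 'I_m -> R) :
  (\sum_(i < m) a i) ^+ 2 <= m%:R * \sum_(i < m) a i ^+ 2.
Proof.
case: m a => [|m] a; first by rewrite !big_ord0 expr0n /= mul0r.
set s := \sum_(i < m.+1) a i; set q := \sum_(i < m.+1) a i ^+ 2.
set k := s / m.+1%:R.
have hm : 0 < m.+1%:R :> R by rewrite ltr0n.
have e : \sum_(i < m.+1) (a i - k) ^+ 2 = q - 2 * k * s + m.+1%:R * k ^+ 2.
  rewrite (eq_bigr (fun i => a i ^+ 2 - (2 * k) * a i + k ^+ 2)); last first.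
    by move=> i _; ring.
  rewrite big_split /= sumrB -mulr_sumr sumr_const card_ord.
  by rewrite -/q -/s !mulr_natl.
have : 0 <= \sum_(i < m.+1) (a i - k) ^+ 2 by apply: sumr_ge0 => i _; apply: sqr_ge0.
rewrite e /k => h.
have h2 : 0 <= m.+1%:R * (q - 2 * (s / m.+1%:R) * s + m.+1%:R * (s / m.+1%:R) ^+ 2).
  by apply: mulr_ge0 => //; apply: ltW.
have gen : forall N q s : R, N != 0 ->
    N * (q - 2 * (s / N) * s + N * (s / N) ^+ 2) = N * q - s ^+ 2.
  by move=> N q0 s0 hN; field.
by rewrite gen ?gt_eqF // subr_ge0 in h2.
Qed.

Definition greedyP (R : realType) (X H : normedModType R) (ip : H -> H -> R)
  (S : X -> H) (F : set X) (rho : R) (k : nat) (f g : nat -> X) : Prop :=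
 (forall i, (i < k)%N -> F (f i) /\ F (g i) /\ rho < `|S (f i) - S (g i)| / 2) /\
 (forall i j, (i < k)%N -> (j < k)%N -> i != j ->
    ip (S (f i) - S (g i)) (S (f j) - S (g j)) = 0).

Lemma greedy (R : realType) (X H : normedModType R) (ip : H -> H -> R)
  (S : X -> H) (F : set X) (n : nat) (rho : R) :
  is_inner_product ip -> bounded_linear S ->
  (forall L : 'I_n -> X -> R, (forall k, dual_elt (L k)) ->
     (rho%:E < gelfand_radius S F L)%E) ->
  forall k, (k <= n.+1)%N -> exists f g, greedyP ip S F rho k f g.
Proof.
move=> hip [hSl hSc] hG; elim=> [|k IH] hk.
  by exists (fun=> 0), (fun=> 0); split.
have [f [g [hP hO]]] := IH (ltnW hk).
have kn : (k <= n)%N by [].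
pose d i := S (f i) - S (g i).
pose L := fun (j : 'I_n) => if (j < k)%N then (fun x : X => ip (S x) (d j)) else (fun=> 0).
have hL : forall j, dual_elt (L j).
  move=> j; rewrite /dual_elt /bounded_linear /L; case: (j < k)%N; split.
  - move=> a x y; rewrite (hSl a x y).
    by have := ip_lin (d j) hip; move=> /(_ a (S x) (S y)).
  - exact: (ip_cont (h := d j) hip hSc).
  - by move=> a x y; rewrite /GRing.scale /= mulr0 addr0.
  - exact: cst_continuous.
have := hG L hL.
move=> /ereal_sup_gt [y [[a b] [Fa [Fb hab]] <-]] /=; rewrite lte_fin => hr.
exists (fun i => if i == k then a else f i), (fun i => if i == k then b else g i).
split.
  move=> i; rewrite ltnS leq_eqVlt => /orP [/eqP ->|hi]; first by rewrite eqxx.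
  by rewrite (ltn_eqF hi); apply: hP.
have key : forall j, (j < k)%N -> ip (S a - S b) (d j) = 0.
  move=> j hj; have jn : (j < n)%N by apply: leq_trans hj kn.
  have := hab (Ordinal jn); rewrite /L /= hj => e.
  have l := ip_lin (d j) hip.
  by rewrite (linB _ _ l) /= e subrr.
case: (hip) => hs _ _.
move=> i j hi hj.
move: hi; rewrite ltnS leq_eqVlt => /orP [/eqP ->|hi];
  move: hj; rewrite ltnS leq_eqVlt => /orP [/eqP ->|hj].
- by rewrite eqxx.
- by rewrite eqxx (ltn_eqF hj) => _; apply: key.
- by rewrite eqxx (ltn_eqF hi) => _; rewrite hs; apply: key.
- by rewrite (ltn_eqF hi) (ltn_eqF hj); apply: hO.
Qed.

Lemma sq_le (R : realType) (a b : R) : 0 <= a -> a <= b -> a ^+ 2 <= b ^+ 2.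
Proof. by move=> ha hab; nra. Qed.

Lemma sq_le_inv (R : realType) (a b : R) :
  0 <= a -> 0 <= b -> a ^+ 2 <= b ^+ 2 -> a <= b.
Proof. by move=> ha hb h; nra. Qed.

Lemma lin2 (R : realType) (X : lmodType R) (x y : X) p q s q' :
  p *: (q *: (x + y)) + s *: (q' *: (x - y)) =
  (p * q + s * q') *: x + (p * q - s * q') *: y.
Proof.
rewrite !scalerDr !scalerA !scalerN scalerDl scalerBl.
by rewrite addrACA.
Qed.

Lemma core (R : realType) (X H : normedModType R) (ip : H -> H -> R)
  (S : X -> H) (F : set X) (n : nat) (rho : R) (f g : nat -> X) :
  is_inner_product ip -> is_linear S -> convex F -> 0 < rho ->
  greedyP ip S F rho n.+1 f g ->
  bernstein_admissible S F n (rho / n.+1%:R) /\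
  (symmetric_set F -> bernstein_admissible S F n (rho / Num.sqrt n.+1%:R)).
Proof.
move=> hip hSl hF hr [hP hO].
case: (hip) => hs _ hn.
pose e := fun i : 'I_n.+1 => 2^-1 *: (f i - g i).
pose D := fun i : 'I_n.+1 => S (e i).
have hD : forall i, rho < `|D i|.
  move=> i; rewrite /D /e (linZ _ _ hSl) (linB _ _ hSl) normrZ.
  rewrite ger0_norm ?invr_ge0 ?ler0n // mulrC.
  by case: (hP i (ltn_ord i)) => _ [].
have hDo : forall i j, i != j -> ip (D i) (D j) = 0.
  move=> i j hij; rewrite /D /e !(linZ _ _ hSl) !(linB _ _ hSl).
  have l1 := ip_lin (2^-1 *: (S (f j) - S (g j))) hip.
  have l2 := ip_linr (S (f i) - S (g i)) hip.
  rewrite /= in l1 l2.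
  rewrite (linZ _ _ l1) (linZ _ _ l2) hO ?ltn_ord //.
  by rewrite /GRing.scale /= !mulr0.
have nrm : forall c : 'I_n.+1 -> R,
    `|S (\sum_i c i *: e i)| ^+ 2 = \sum_i c i ^+ 2 * `|D i| ^+ 2.
  by move=> c; rewrite (lin_sum _ _ hSl) (ip_sum _ hip hDo).
have ci_le : forall (c : 'I_n.+1 -> R) i, `|c i| * rho <= `|S (\sum_i c i *: e i)|.
  move=> c i.
  have h1 : c i ^+ 2 * `|D i| ^+ 2 <= `|S (\sum_i c i *: e i)| ^+ 2.
    rewrite nrm (bigD1 i) //= lerDl.
    by apply: sumr_ge0 => j _; apply: mulr_ge0; apply: sqr_ge0.
  have h2 : `|c i| * `|D i| <= `|S (\sum_i c i *: e i)|.
    have : (`|c i| * `|D i|) ^+ 2 <= `|S (\sum_i c i *: e i)| ^+ 2.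
      by rewrite exprMn real_normK ?num_real.
    have := normr_ge0 (S (\sum_i c i *: e i)).
    have : 0 <= `|c i| * `|D i| by apply: mulr_ge0.
    by move: (`|c i| * `|D i|) (`|S (\sum_i c i *: e i)|) => a b; nra.
  apply: le_trans h2; apply: ler_wpM2l => //.
  exact: ltW (hD i).
have zero : forall c : 'I_n.+1 -> R, S (\sum_i c i *: e i) = 0 -> forall i, c i = 0.
  move=> c h i; have := ci_le c i; rewrite h normr0 => h3.
  apply/normr0_eq0/eqP; rewrite eq_le normr_ge0 andbT.
  by move: h3 (normr_ge0 (c i)); move: (`|c i|) => a; nra.
have hind : lin_indep e.
  by move=> c h i; apply: zero; rewrite h (lin0 hSl).
have hinj : {in span_of e &, injective S}.
  move=> v w; rewrite !in_setE => [[c ->]] [c' ->] hvw.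
  have e1 : \sum_i c i *: e i - \sum_i c' i *: e i = \sum_i (c i - c' i) *: e i.
    by rewrite -sumrB; apply: eq_bigr => i _; rewrite scalerBl.
  have z := zero (fun i => c i - c' i).
  apply/eqP; rewrite -subr_eq0 e1; apply/eqP.
  rewrite big1 // => i _; rewrite z ?scale0r //.
  by rewrite -e1 (linB _ _ hSl) hvw subrr.
have hm : 0 < n.+1%:R :> R by rewrite ltr0n.
split.
  split; first by apply: divr_gt0.
  exists e; split => //; split => //.
  exists (\sum_(i < n.+1) n.+1%:R^-1 *: (2^-1 *: (f i + g i))).
  suff hball : forall v, span_of e v -> `|S v| <= rho / n.+1%:R ->
      F (\sum_(i < n.+1) n.+1%:R^-1 *: (2^-1 *: (f i + g i)) + v).
    split => //; rewrite -[X in F X]addr0; apply: hball.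
      by exists (fun=> 0); rewrite big1 // => i _; rewrite scale0r.
    by rewrite (lin0 hSl) normr0; apply: divr_ge0 => //; apply: ltW.
  move=> v [c ->] hv.
  have hc : forall i, `|c i| <= n.+1%:R^-1.
    move=> i; have := le_trans (ci_le c i) hv.
    by move=> h; rewrite -(ler_pM2r hr) [X in _ <= X]mulrC.
  pose t := fun i => 2^-1 + n.+1%:R * c i / 2.
  rewrite -big_split /=.
  have -> : \sum_(i < n.+1) (n.+1%:R^-1 *: (2^-1 *: (f i + g i)) + c i *: e i)
     = \sum_(i < n.+1) n.+1%:R^-1 *: (t i *: f i + (1 - t i) *: g i).
    apply: eq_bigr => i _; rewrite /e lin2 scalerDr !scalerA.
    congr (_ *: _ + _ *: _); rewrite /t; field; rewrite gt_eqF //.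
  have sw : \sum_(i < n.+1) n.+1%:R^-1 = 1 :> R.
    rewrite sumr_const card_ord.
    have -> : (n.+1%:R^-1 : R) *+ n.+1 = n.+1%:R^-1 * n.+1%:R by rewrite mulr_natr.
    by rewrite mulVf ?gt_eqF.
  apply: convex_comb => //.
  - by rewrite sw.
  - by rewrite sw ltxx.
  - move=> i; have := hc i; rewrite ler_norml => /andP [h1 h2].
    have [Ff [Fg _]] := hP i (ltn_ord i).
    apply: hF => //.
    + rewrite /t; have : - 1 <= n.+1%:R * c i.
        have hmv := mulfV (lt0r_neq0 hm).
        by move: hmv h1 hm; move: (n.+1%:R) (n.+1%:R^-1) => a b; nra.
      by lra.
    + rewrite /t; have : n.+1%:R * c i <= 1.
        have hmv := mulfV (lt0r_neq0 hm).
        by move: hmv h2 hm; move: (n.+1%:R) (n.+1%:R^-1) => a b; nra.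
      by lra.
move=> hsym.
have sq0 : 0 < Num.sqrt n.+1%:R :> R by rewrite sqrtr_gt0.
split; first by apply: divr_gt0.
exists e; split => //; split => //; exists 0.
have half : 1 - 2^-1 = 2^-1 :> R by field.
have h20 : 0 <= 2^-1 :> R by rewrite invr_ge0 ler0n.
have h21 : 2^-1 <= 1 :> R by rewrite invf_le1 ?ltr0n ?ler1n.
have Fe : forall i, F (e i).
  move=> i; have [Ff [Fg _]] := hP i (ltn_ord i).
  have -> : e i = 2^-1 *: f i + (1 - 2^-1) *: (- g i).
    by rewrite /e scalerBr half scalerN.
  by apply: hF => //; apply: hsym.
have F0 : F 0.
  have -> : (0 : X) = 2^-1 *: e ord0 + (1 - 2^-1) *: (- e ord0).
    by rewrite half scalerN addrN.
  by apply: hF => //; apply: hsym.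
split => //.
move=> v [c ->] hv; rewrite add0r.
have h1 : (\sum_i c i ^+ 2) * rho ^+ 2 <= rho ^+ 2 / n.+1%:R.
  have -> : rho ^+ 2 / n.+1%:R = (rho / Num.sqrt n.+1%:R) ^+ 2.
    by rewrite expr_div_n sqr_sqrtr // ler0n.
  have hv2 : `|S (\sum_i c i *: e i)| ^+ 2 <= (rho / Num.sqrt n.+1%:R) ^+ 2.
    by apply: sq_le.
  apply: le_trans hv2; rewrite nrm mulr_suml; apply: ler_sum => i _.
  apply: ler_wpM2l; first exact: sqr_ge0.
  by apply: sq_le; [apply: ltW | apply: ltW (hD i)].
have h2 : \sum_i c i ^+ 2 <= n.+1%:R^-1.
  by rewrite -(ler_pM2r (exprn_gt0 2 hr)) [X in _ <= X]mulrC.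
have h3 : (\sum_i `|c i|) ^+ 2 <= 1.
  apply: le_trans (cs_sum (fun i => `|c i|)) _.
  have -> : \sum_(i < n.+1) `|c i| ^+ 2 = \sum_(i < n.+1) c i ^+ 2.
    by apply: eq_bigr => i _; rewrite real_normK ?num_real.
  apply: le_trans (ler_wpM2l (ltW hm) h2) _.
  by rewrite mulfV ?lt0r_neq0.
have h4 : \sum_i `|c i| <= 1.
  apply: sq_le_inv => //; first by apply: sumr_ge0 => i _.
  by rewrite expr1n.
have -> : \sum_(i < n.+1) c i *: e i =
    \sum_(i < n.+1) `|c i| *: (if 0 <= c i then e i else - e i).
  apply: eq_bigr => i _; case: ifPn => hc; first by rewrite ger0_norm.
  by rewrite ltr0_norm ?ltNge // scaleNr scalerN opprK.
apply: convex_comb => //.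
- by move=> i; case: ifP => _; [apply: Fe | apply: hsym; apply: Fe].
Qed.

Lemma final (R : realType) (G B : \bar R) (c : R) (P : R -> Prop) :
  0 < c -> (0 <= B)%E -> (forall r, P r -> (r%:E <= B)%E) ->
  (forall rho, 0 < rho -> ~ (G <= rho%:E)%E -> P (rho / c)) ->
  (G <= c%:E * B)%E.
Proof.
move=> hc hB hPB hK.
case: B hB hPB => [r| |] hB hPB.
- rewrite lee_fin in hB.
  apply/lee_addgt0Pr => eps heps.
  rewrite -EFinM -EFinD.
  case: (boolP (G <= (c * r + eps)%:E)%E) => // /negP hn.
  have hr : 0 < c * r + eps by apply: ltr_wpDl => //; apply: mulr_ge0 => //; apply: ltW.
  have := hPB _ (hK _ hr hn); rewrite lee_fin ler_pdivrMr // => h.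
  by exfalso; move: h; rewrite mulrC; lra.
- by rewrite mulry gtr0_sg // mul1e leey.
- by [].
Qed.

Theorem theorem3p5 (R : realType) (X H : completeNormedModType R)
  (ip : H -> H -> R) (S : X -> H) (F : set X) (n : nat) :
  is_inner_product ip ->
  bounded_linear S ->
  convex F ->
  (gelfand_number S F n <= n.+1%:R%:E * bernstein_number S F n)%E /\
  (symmetric_set F ->
   (gelfand_number S F n <= (Num.sqrt n.+1%:R)%:E * bernstein_number S F n)%E).
Proof.
move=> hip [hSl hSc] hF.
have key : forall rho, 0 < rho -> ~ (gelfand_number S F n <= rho%:E)%E ->
    bernstein_admissible S F n (rho / n.+1%:R) /\
    (symmetric_set F -> bernstein_admissible S F n (rho / Num.sqrt n.+1%:R)).
  move=> rho hr hg.
  have hG : forall L : 'I_n -> X -> R, (forall k, dual_elt (L k)) ->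
      (rho%:E < gelfand_radius S F L)%E.
    move=> L hL; rewrite ltNge; apply/negP => hle; apply: hg.
    by apply: ge_ereal_inf; exists (gelfand_radius S F L) => //; exists L.
  have [f [g hfg]] := greedy hip (conj hSl hSc) hG (leqnn n.+1).
  exact: core hip hSl hF hr hfg.
have bge : forall r, bernstein_admissible S F n r -> (r%:E <= bernstein_number S F n)%E.
  by move=> r hr; apply: ereal_sup_ubound; left; exists r.
have b0 : (0 <= bernstein_number S F n)%E.
  by apply: ereal_sup_ubound; right.
split.
  apply: final b0 bge _; first by rewrite ltr0n.
  by move=> rho hr hn; case: (key rho hr hn).
move=> hsym; apply: final b0 bge _; first by rewrite sqrtr_gt0 ltr0n.
by move=> rho hr hn; case: (key rho hr hn) => _; apply.
Qed.
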